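(* Let $h:\{0,1\}^t\times\{0,1\}^t\to\{0,1\}$ be a Boolean function, and let $G$ be the graph with vertex set $V=h^{-1}(0)$ in which distinct $(x,y),(x',y')\in V$ are adjacent iff $h(x,y')=1$ or $h(x',y)=1$. Then $\chi(G)\ge\mathrm{Cov}_0(h)$. Moreover, if $h^{-1}(1)=\bigsqcup_{i=1}^m A_i\times B_i$ is a partition into $1$-monochromatic rectangles, then the bicliques $Q_i=S_i^-\times S_i^+$, where $S_i^-=\{(x,y)\in V: x\in A_i\}$ and $S_i^+=\{(x,y)\in V:y\in B_i\}$, are subgraphs of $G$ and every edge of $G$ belongs to at least one and at most two of $Q_1,\dots,Q_m$.
   Context: A $b$-monochromatic rectangle for $h$ is a set $A\times B$ with $A,B\subseteq\{0,1\}^t$ on which $h\equiv b$; $\mathrm{Cov}_0(h)$ is the minimum number of $0$-monochromatic rectangles whose union is $h^{-1}(0)$. A biclique $S^-\times S^+$ denotes the complete bipartite graph with all edges between $u\in S^-$ and $v\in S^+$. $\chi(G)$ is the chromatic number. *)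

(* Defs.v *)
From mathcomp Require Import all_boot.
Set Implicit Arguments. Unset Strict Implicit. Unset Printing Implicit Defensive.

Notation cube t := {ffun 'I_t -> bool}.

Section Defs.
Variable t : nat.
Variable h : cube t -> cube t -> bool.

Definition Vset : {set cube t * cube t} := [set p | ~~ h p.1 p.2].

Definition adjG (u v : cube t * cube t) : bool :=
  [&& u \in Vset, v \in Vset, u != v & h u.1 v.2 || h v.1 u.2].

Definition colorable (k : nat) : bool :=
  [exists f : {ffun cube t * cube t -> 'I_k},
     [forall u, forall v, adjG u v ==> (f u != f v)]].

(* chromatic number: least k admitting a proper colouring
   (#|V| colours always suffice, so the default is never binding) *)
Definition chiG : nat :=
  \big[minn/#|Vset|]_(k < #|Vset|.+1 | colorable k) k.

Definition mono0 (A B : {set cube t}) : bool :=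
  [forall x in A, forall y in B, ~~ h x y].

Definition cover0 (k : nat) : bool :=
  [exists R : {ffun 'I_k -> {set cube t} * {set cube t}},
     [forall i, mono0 (R i).1 (R i).2] &&
     [forall x, forall y, ~~ h x y ==> [exists i, (x \in (R i).1) && (y \in (R i).2)]]].

(* Cov_0(h): least such k (#|V| singleton rectangles always suffice) *)
Definition Cov0 : nat :=
  \big[minn/#|Vset|]_(k < #|Vset|.+1 | cover0 k) k.

Definition Sminus (A : {set cube t}) : {set cube t * cube t} :=
  [set p in Vset | p.1 \in A].
Definition Splus (B : {set cube t}) : {set cube t * cube t} :=
  [set p in Vset | p.2 \in B].

Definition biclique_edge (Sm Sp : {set cube t * cube t}) (u v : cube t * cube t) : bool :=
  (u \in Sm) && (v \in Sp) || (v \in Sm) && (u \in Sp).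

End Defs.

(* Main.v *)
Require Import Defs.
From mathcomp Require Import all_boot.

Section H.
Variable t : nat.
Variable h : cube t -> cube t -> bool.

Lemma col_cover k : colorable h k -> cover0 h k.
Proof.
case/existsP=> f /forallP Hf.
apply/existsP.
exists [ffun j : 'I_k => ([set x | [exists y, ((x, y) \in Vset h) && (f (x, y) == j)]],
                        [set y | [exists x, ((x, y) \in Vset h) && (f (x, y) == j)]])].
apply/andP; split.
  apply/forallP=> j; rewrite ffunE /=; apply/forallP=> x; apply/implyP.
  rewrite inE => /existsP [y1 /andP [V1 /eqP F1]].
  apply/forallP=> y; apply/implyP; rewrite inE => /existsP [x2 /andP [V2 /eqP F2]].
  apply/negP=> hxy.
  have [E|NE] := eqVneq (x, y1) (x2, y).
    case: E => Ex _; by move: V2; rewrite -Ex inE /= hxy.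
  have := Hf (x, y1) => /forallP /(_ (x2, y)) /implyP; rewrite /adjG V1 V2 NE /= hxy F1 F2.
  by move=> /(_ isT); rewrite eqxx.
apply/forallP=> x; apply/forallP=> y; apply/implyP=> hn.
have V : (x, y) \in Vset h by rewrite inE.
apply/existsP; exists (f (x, y)); rewrite ffunE /= !inE.
by apply/andP; split; apply/existsP; [exists y | exists x]; rewrite V eqxx.
Qed.

Lemma Cov0_le_V : Cov0 h <= #|Vset h|.
Proof.
rewrite /Cov0; elim/big_ind: _ => //.
- by move=> a b Ha _; rewrite geq_min Ha.
- by move=> i _; rewrite -ltnS ltn_ord.
Qed.

Lemma bigmin_le_seq (I : eqType) (r : seq I) (P : pred I) (F : I -> nat) d j :
  j \in r -> P j -> \big[minn/d]_(i <- r | P i) F i <= F j.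
Proof.
elim: r => // a r IH; rewrite inE big_cons => /orP [/eqP -> Pj|jr Pj].
  by rewrite Pj geq_minl.
case: (P a); last exact: IH.
by rewrite geq_min IH ?orbT.
Qed.

Lemma Cov0_le k : k <= #|Vset h| -> cover0 h k -> Cov0 h <= k.
Proof.
move=> Hk Hc; rewrite /Cov0.
have Hk' : k < #|Vset h|.+1 by [].
exact: (@bigmin_le_seq _ _ (fun i : 'I_#|Vset h|.+1 => cover0 h i) (fun i : 'I_#|Vset h|.+1 => nat_of_ord i) _ (Ordinal Hk') (mem_index_enum _) Hc).
Qed.

Lemma part1 : Cov0 h <= chiG h.
Proof.
rewrite /chiG; elim/big_ind: _.
- exact: Cov0_le_V.
- by move=> a b Ha Hb; rewrite leq_min Ha Hb.
- move=> i Hi; apply: Cov0_le; first by rewrite -ltnS ltn_ord.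
  exact: col_cover.
Qed.
End H.

Theorem mainTheorem11 (t : nat) (h : cube t -> cube t -> bool) :
  Cov0 h <= chiG h /\
  (forall (m : nat) (A B : 'I_m -> {set cube t}),
     (* h^{-1}(1) is the union of the rectangles A_i x B_i ... *)
     (forall x y, h x y = true <-> exists i, x \in A i /\ y \in B i) ->
     (* ... and the union is disjoint *)
     (forall i j x y, x \in A i -> y \in B i -> x \in A j -> y \in B j -> i = j) ->
     (* each Q_i is a subgraph of G *)
     (forall i u v, biclique_edge (Sminus h (A i)) (Splus h (B i)) u v -> adjG h u v) /\
     (* every edge lies in at least one and at most two Q_i *)
     (forall u v, adjG h u v ->
        0 < #|[set i | biclique_edge (Sminus h (A i)) (Splus h (B i)) u v]| <= 2)).
Proof.
split; first exact: part1.
move=> m A B HAB Hdis; split.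
  move=> i [u1 u2] [v1 v2]; rewrite /biclique_edge /adjG !inE /=.
  case/orP=> /andP [/andP [Vu Au] /andP [Vv Bv]].
  - have hh : h u1 v2 by apply/HAB; exists i.
    rewrite Vu Vv hh /= andbT; apply/negP=> /eqP [E1 E2].
    by move: Vu; rewrite E2 hh.
  - have hh : h v1 u2 by apply/HAB; exists i.
    rewrite Vu Vv hh /= orbT andbT; apply/negP=> /eqP [E1 E2].
    by move: Vu; rewrite -E2 hh.
move=> [u1 u2] [v1 v2]; rewrite /adjG !inE /= => /and4P [Vu Vv _ Hor].
apply/andP; split.
  case/orP: Hor => /HAB [i [Ai Bi]]; apply/card_gt0P; exists i;
    by rewrite !inE /biclique_edge !inE /= Vu Vv Ai Bi ?orbT.
set S1 := [set i | (u1 \in A i) && (v2 \in B i)].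
set S2 := [set i | (v1 \in A i) && (u2 \in B i)].
have sub : [set i | biclique_edge (Sminus h (A i)) (Splus h (B i)) (u1, u2) (v1, v2)]
           \subset S1 :|: S2.
  apply/subsetP=> i; rewrite !inE /biclique_edge !inE /= Vu Vv /=.
  by case/orP=> /andP [-> ->]; rewrite ?orbT.
have c1 : #|S1| <= 1.
  apply/card_le1_eqP=> i j; rewrite /S1 /S2 !inE => /andP [a b] /andP [c d].
  exact: (Hdis j i u1 v2).
have c2 : #|S2| <= 1.
  apply/card_le1_eqP=> i j; rewrite /S1 /S2 !inE => /andP [a b] /andP [c d].
  exact: (Hdis j i v1 u2).
apply: (leq_trans (subset_leq_card sub)).
apply: (leq_trans (leq_card_setU _ _).1).
by rewrite -[2]/(1 + 1) leq_add.
Qed.
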